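(* With the notation below, let $D\in\mathrm{Div}(C_p)$ and let $f\in\mathcal K(C_p)$ be real-valued. (i) Put $D'=D+(f)$. For every integer $n\geq0$ with $\|f\|_p\leq p^n$, the map $\xi\mapsto\xi-f$ induces a bijection from $H^0(D)^{p^n}$ onto $H^0(D')^{p^n}$ (which is an isomorphism of $\mathbb{R}_{\max}$-modules). (ii) For every integer $n\geq0$, the map $F_{p^n}:\xi\mapsto p^n\xi$ is a bijection $H^0(D)^{p^n}\to H^0(p^nD)^1$ which is an isomorphism of $\mathbb{R}_{\max}$-modules twisted by the automorphism $x\mapsto p^nx$ of $\mathbb{R}_{\max}$ (i.e. it preserves $\vee$ and $F_{p^n}(\xi+a)=F_{p^n}(\xi)+p^na$), and it preserves the topological dimension.
   Context: Let $p$ be a prime, $H_p=\mathbb{Z}[1/p]$, $|\cdot|_p$ the $p$-adic absolute value with $|p|_p=1/p$. $\mathbb{R}_{\max}=\mathbb{R}\cup\{-\infty\}$ with operations $\max$ and $+$. $C_p$ is the set of subgroups $H=\lambda H_p\subset\mathbb{R}$, $\lambda>0$. $\mathcal K(C_p)$: continuous piecewise affine $f:(0,\infty)\to\mathbb{R}$ with slopes in $H_p$ and $f(p\lambda)=f(\lambda)$, plus the constant $-\infty$. For real-valued $f$ and $H=\lambda H_p$, $\mathrm{Ord}_H(f)=h_+-h_-$, $h_\pm=\lim_{\epsilon\to0\pm}(f((1+\epsilon)\lambda)-f(\lambda))/\epsilon$; $(f)(H)=\mathrm{Ord}_H(f)$. Divisors: maps $D$ with $D(H)\in H$, finitely supported,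 ordered pointwise, group $\mathrm{Div}(C_p)$. $H^0(D)=\{f\in\mathcal K(C_p)\text{ real-valued}\mid D+(f)\geq0\}\cup\{-\infty\}$, an $\mathbb{R}_{\max}$-module via max and addition of constants, topologized by $d(f,g)=\max_{x\in[1,p]}|f(x)-g(x)|$. $\|f\|_p=\max\{|h|_p/\lambda\}$ over $\lambda>0$ and $h$ the left/right slopes of $f$ at $\lambda$; $H^0(D)^\rho=\{f\in H^0(D)\mid\|f\|_p\leq\rho\}$ (containing $-\infty$). Topological dimension is the Lebesgue covering dimension. *)

(* Defs.v *)
From HB Require Import structures.
From mathcomp Require Import all_boot all_order all_algebra.
From mathcomp Require Import all_classical all_reals all_analysis.
Set Implicit Arguments. Unset Strict Implicit. Unset Printing Implicit Defensive.
Import Order.TTheory GRing.Theory Num.Theory.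
Import numFieldNormedType.Exports.
Local Open Scope classical_set_scope.
Local Open Scope ring_scope.

Section Defs.
Variable R : realType.

Definition posR := {x : R | 0 < x}.

(* a function on (0,+oo), viewed as a function on R (value 0 off (0,+oo));
   used only to speak of values, limits and affine pieces *)
Definition ext (f : posR -> R) (x : R) : R :=
  odflt 0 (omap f (insub x : option posR)).

Definition inHp (p : nat) (h : R) : Prop :=
  exists (m : int) (k : nat), h = m%:~R / (p%:R ^+ k).

(* p-adic absolute value on H_p: |m / p^k|_p = p^(k - v_p(m)), |0|_p = 0 *)
Definition pabs (p : nat) (h : R) : R :=
  xget 0 [set a | exists (m : int) (k : nat), m != 0 /\ h = m%:~R / (p%:R ^+ k)
                   /\ a = p%:R ^+ k / p%:R ^+ (logn p `|m|%N)].

Definition pw_affine (p : nat) (f : posR -> R) : Prop :=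
  (forall x : R, 0 < x -> {for x, continuous (ext f)}) /\
  forall a b : R, 0 < a -> a < b ->
    exists (k : nat) (t : nat -> R),
      [/\ t 0%N = a, t k = b, (forall i, (i < k)%N -> t i < t i.+1) &
        forall i, (i < k)%N -> exists s c : R, inHp p s /\
          forall y, t i <= y <= t i.+1 -> ext f y = s * y + c].

(* real-valued elements of K(C_p) *)
Definition inK (p : nat) (f : posR -> R) : Prop :=
  pw_affine p f /\ forall x : R, 0 < x -> ext f (p%:R * x) = ext f x.

Definition rslope (f : posR -> R) (x : R) : R :=
  lim ((fun t => (ext f (x + t) - ext f x) / t) @ 0^'+).
Definition lslope (f : posR -> R) (x : R) : R :=
  lim ((fun t => (ext f (x + t) - ext f x) / t) @ 0^'-).

(* Ord_H(f) for H = lam H_p, as a function of the representative lam *)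
Definition ordf (f : posR -> R) (lam : R) : R :=
  lim ((fun e => (ext f ((1 + e) * lam) - ext f lam) / e) @ 0^'+)
  - lim ((fun e => (ext f ((1 + e) * lam) - ext f lam) / e) @ 0^'-).

(* a divisor D : C_p -> R, encoded by lam |-> D(lam H_p) for lam > 0:
   well defined (invariant under lam |-> p lam), D(H) in H, finite support *)
Definition is_divisor (p : nat) (D : R -> R) : Prop :=
  [/\ (forall lam, 0 < lam -> D (p%:R * lam) = D lam),
      (forall lam, 0 < lam -> exists h, inHp p h /\ D lam = lam * h) &
      exists s : seq R, forall lam, 1 <= lam < p%:R -> D lam != 0 -> lam \in s].

Definition div_add_ord (D : R -> R) (f : posR -> R) : R -> R :=
  fun lam => D lam + ordf f lam.
Definition div_scale (c : R) (D : R -> R) : R -> R := fun lam => c * D lam.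

Definition pnorm_le (p : nat) (f : posR -> R) (rho : R) : Prop :=
  forall lam : R, 0 < lam ->
    pabs p (lslope f lam) / lam <= rho /\ pabs p (rslope f lam) / lam <= rho.

(* elements of K(C_p) together with -oo (= None) *)
Definition Kelt := option (posR -> R).
(* R_max = R u {-oo} (None = -oo) *)
Definition Rmax := option R.

Definition H0 (p : nat) (D : R -> R) : set Kelt :=
  fun xi => match xi with
            | None => True
            | Some g => inK p g /\ forall lam, 0 < lam -> 0 <= D lam + ordf g lam
            end.

Definition H0rho (p : nat) (D : R -> R) (rho : R) : set Kelt :=
  fun xi => H0 p D xi /\ match xi with None => True | Some g => pnorm_le p g rho end.

Definition kjoin (xi eta : Kelt) : Kelt :=
  match xi, eta with
  | Some g, Some h => Some (fun x => Num.max (g x) (h x))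
  | None, _ => eta
  | _, None => xi
  end.
Definition kact (a : Rmax) (xi : Kelt) : Kelt :=
  match a, xi with
  | Some a, Some g => Some (fun x => g x + a)
  | _, _ => None
  end.

(* the metric d(f,g) = max_{x in [1,p]} |f x - g x|; -oo is isolated *)
Definition dist (p : nat) (f g : posR -> R) : R :=
  sup [set `|ext f x - ext g x| | x in `[1, p%:R]%classic].
Definition close (p : nat) (xi eta : Kelt) (e : R) : Prop :=
  match xi, eta with
  | Some f, Some g => dist p f g < e
  | None, None => True
  | _, _ => False
  end.
Definition openIn (p : nat) (S U : set Kelt) : Prop :=
  U `<=` S /\ forall x, U x -> exists2 e : R, 0 < e &
    forall y, S y -> close p x y e -> U y.

Definition covdim_le (p : nat) (S : set Kelt) (n : nat) : Prop :=
  forall (m : nat) (U : nat -> set Kelt),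
    (forall i, (i < m)%N -> openIn p S (U i)) ->
    (forall x, S x -> exists2 i, (i < m)%N & U i x) ->
    exists (k : nat) (V : nat -> set Kelt),
      [/\ forall j, (j < k)%N -> openIn p S (V j),
          forall x, S x -> exists2 j, (j < k)%N & V j x,
          forall j, (j < k)%N -> exists2 i, (i < m)%N & V j `<=` U i &
          forall x, S x -> forall J : seq nat, uniq J ->
            (forall j, j \in J -> (j < k)%N /\ V j x) -> (size J <= n.+1)%N].

(* topological (covering) dimension, in \bar R (+oo if none) *)
Definition top_dim (p : nat) (S : set Kelt) : \bar R :=
  ereal_inf [set (n%:R)%:E | n in [set n | covdim_le p S n]].

End Defs.

(* Main.v *)
From Pilot Require Import Defs.
From HB Require Import structures.
From mathcomp Require Import all_boot all_order all_algebra.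
From mathcomp Require Import all_classical all_reals all_analysis.
From mathcomp Require Import ring lra.
Import Pilot.Defs.
Import Order.TTheory GRing.Theory Num.Theory.
Import numFieldNormedType.Exports.
Local Open Scope classical_set_scope.
Local Open Scope ring_scope.
Set Implicit Arguments. Unset Strict Implicit.

Section Pabs.
Variable R : realType.
Variable p : nat.
Hypothesis hp : prime p.

Lemma natzR (n : nat) : ((n%:Z)%:~R : R) = n%:R.
Proof. by rewrite -pmulrn. Qed.

Lemma P_gt1 : (1 : R) < p%:R.
Proof. by rewrite ltr1n prime_gt1. Qed.
Lemma P_gt0 : (0 : R) < p%:R.
Proof. by rewrite ltr0n prime_gt0. Qed.
Lemma PX_gt0 k : (0 : R) < p%:R ^+ k.
Proof. by rewrite exprn_gt0 // P_gt0. Qed.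
Lemma PX_neq0 k : (p%:R ^+ k : R) != 0.
Proof. by rewrite gt_eqF // PX_gt0. Qed.

Lemma int_eq_cross (m m' : int) k k' :
  m%:~R / (p%:R ^+ k) = m'%:~R / (p%:R ^+ k') :> R ->
  m * (p ^ k')%N%:Z = m' * (p ^ k)%N%:Z.
Proof.
move=> E; apply/eqP; rewrite -(eqr_int R) !rmorphM /=.
have e1 : forall j, ((p ^ j)%N%:Z)%:~R = p%:R ^+ j :> R.
  by move=> j; rewrite pmulrn -natrX.
rewrite !e1; apply/eqP.
have h1 := PX_neq0 k; have h2 := PX_neq0 k'.
apply: (mulIf h1); apply: (mulIf h2).
have -> : m%:~R * p%:R ^+ k' * p%:R ^+ k * p%:R ^+ k' = (m%:~R / p%:R ^+ k) * (p%:R ^+ k * p%:R ^+ k * p%:R ^+ k') * p%:R^+k' :> R.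
  by field; rewrite ?PX_neq0.
rewrite E; field; by rewrite ?PX_neq0.
Qed.

Lemma pabs_eq (m : int) k : m != 0 ->
  pabs p (m%:~R / (p%:R ^+ k) : R) = p%:R ^+ k / p%:R ^+ (logn p `|m|%N).
Proof.
move=> m0; apply: xget_unique; first by exists m, k.
move=> y [m' [k' [m'0 [E ->]]]].
have C := int_eq_cross E.
have Cn : (`|m| * p ^ k' = `|m'| * p ^ k)%N.
  by move/(congr1 absz): C; rewrite !abszM.
have L : (logn p `|m| + k' = logn p `|m'| + k)%N.
  move/(congr1 (logn p)): Cn.
  rewrite !lognM ?absz_gt0 ?expn_gt0 ?prime_gt0 // !pfactorK //.
have h1 := PX_neq0 k; have h2 := PX_neq0 k'.
have h3 := PX_neq0 (logn p `|m|); have h4 := PX_neq0 (logn p `|m'|).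
apply/eqP; rewrite eqr_div //; apply/eqP.
by rewrite -!exprD addnC L addnC.
Qed.

Lemma pabs0 : pabs p (0 : R) = 0.
Proof.
apply: xgetPN => a [m [k [m0 [E _]]]].
move: E => /esym/eqP; rewrite mulf_eq0 invr_eq0 (negPf (PX_neq0 k)) orbF intr_eq0.
by rewrite (negPf m0).
Qed.

Lemma pabs_ge0 (h : R) : 0 <= pabs p h.
Proof.
rewrite /pabs; case: xgetP => [a ->|] //.
move=> [m [k [_ [_ ->]]]]; by rewrite divr_ge0 // ltW // PX_gt0.
Qed.


Lemma pabs_rep (m : int) k :
  pabs p (m%:~R / (p%:R ^+ k) : R) = if m == 0 then 0 else p%:R ^+ k / p%:R ^+ (logn p `|m|%N).
Proof.
case: eqP => [->|/eqP m0]; last exact: pabs_eq.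
by rewrite mul0r pabs0.
Qed.

Lemma rep_lift (m : int) k j :
  m%:~R / (p%:R ^+ k) = (m * (p ^ j)%N%:Z)%:~R / (p%:R ^+ (k + j)) :> R.
Proof.
rewrite rmorphM /= natzR natrX exprD.
have := PX_neq0 k; have := PX_neq0 j; move=> h1 h2; field.
by rewrite h1 h2.
Qed.

Lemma decr_div K x y : (y <= x)%N -> (p%:R ^+ K / p%:R ^+ x : R) <= p%:R ^+ K / p%:R ^+ y.
Proof.
move=> yx; rewrite ler_pdivrMr ?PX_gt0 // mulrAC ler_pdivlMr ?PX_gt0 //.
by rewrite ler_pM2l ?PX_gt0 // ler_eXn2l // P_gt1.
Qed.

Lemma v_min (a b : int) : a != 0 -> b != 0 -> a + b != 0 ->
  (minn (logn p (absz a)) (logn p (absz b)) <= logn p (absz (a + b)%R))%N.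
Proof.
move=> a0 b0 ab0; set e := minn _ _.
have da : (p ^ e %| `|a|)%N by rewrite pfactor_dvdn ?absz_gt0 // geq_minl.
have db : (p ^ e %| `|b|)%N by rewrite pfactor_dvdn ?absz_gt0 // geq_minr.
have dz : ((p ^ e)%N%:Z %| a + b)%Z.
  have /dvdzP [q1 ->] : ((p ^ e)%N%:Z %| a)%Z by rewrite dvdzE.
  have /dvdzP [q2 ->] : ((p ^ e)%N%:Z %| b)%Z by rewrite dvdzE.
  by apply/dvdzP; exists (q1 + q2); rewrite mulrDl.
by rewrite -pfactor_dvdn ?absz_gt0 //; move: dz; rewrite dvdzE.
Qed.

Lemma ultra_int (a b : int) K :
  pabs p ((a + b)%:~R / (p%:R ^+ K) : R) <=
  Num.max (pabs p (a%:~R / (p%:R ^+ K) : R)) (pabs p (b%:~R / (p%:R ^+ K))).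
Proof.
have [->|a0] := eqVneq a 0.
  by rewrite add0r le_max lexx orbT.
have [->|b0] := eqVneq b 0.
  by rewrite addr0 le_max lexx.
have [ab0|ab0] := eqVneq (a + b) 0.
  by rewrite ab0 mul0r pabs0 le_max pabs_ge0.
rewrite !pabs_eq //.
apply: le_trans (decr_div K (v_min a0 b0 ab0)) _.
rewrite /minn; case: ifP => _; by rewrite le_max lexx ?orbT.
Qed.

Lemma pabs_add (s t : R) : inHp p s -> inHp p t ->
  pabs p (s + t) <= Num.max (pabs p s) (pabs p t).
Proof.
move=> [m1 [k1 ->]] [m2 [k2 ->]].
rewrite (rep_lift m1 k1 k2) (rep_lift m2 k2 k1) addnC -mulrDl -rmorphD.
exact: ultra_int.
Qed.

Lemma pabs_opp (s : R) : inHp p s -> pabs p (- s) = pabs p s.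
Proof.
move=> [m [k ->]]; rewrite -mulNr -rmorphN /= !pabs_rep oppr_eq0.
by rewrite abszN.
Qed.

Lemma inHp_opp (s : R) : inHp p s -> inHp p (- s).
Proof. by move=> [m [k ->]]; exists (- m), k; rewrite rmorphN mulNr. Qed.

Lemma inHp_add (s t : R) : inHp p s -> inHp p t -> inHp p (s + t).
Proof.
move=> [m1 [k1 ->]] [m2 [k2 ->]].
rewrite (rep_lift m1 k1 k2) (rep_lift m2 k2 k1) addnC -mulrDl -rmorphD.
by eexists; eexists.
Qed.

Lemma inHp_mul (s t : R) : inHp p s -> inHp p t -> inHp p (s * t).
Proof.
move=> [m1 [k1 ->]] [m2 [k2 ->]]; exists (m1 * m2), (k1 + k2).
rewrite rmorphM /= exprD invfM; ring.
Qed.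

Lemma inHp_PX n : inHp p (p%:R ^+ n : R).
Proof. by exists (p ^ n)%N%:Z, 0%N; rewrite expr0 divr1 natzR natrX. Qed.

Lemma inHp_PXV n : inHp p ((p%:R ^+ n)^-1 : R).
Proof. by exists 1, n; rewrite mul1r. Qed.

Lemma inHp0 : inHp p (0 : R).
Proof. by exists 0, 0%N; rewrite mul0r. Qed.

Lemma inHp1 : inHp p (1 : R).
Proof. by exists 1, 0%N; rewrite expr0 divr1. Qed.

Lemma pabs_scale n (s : R) : inHp p s -> pabs p (p%:R ^+ n * s) = pabs p s / p%:R ^+ n.
Proof.
move=> [m [k ->]].
have -> : p%:R ^+ n * (m%:~R / p%:R ^+ k) = (m * (p ^ n)%N%:Z)%:~R / p%:R ^+ k :> R.
  by rewrite rmorphM /= natzR natrX; ring.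
have hn : ((p ^ n)%N%:Z != 0) by rewrite eqz_nat -lt0n expn_gt0 prime_gt0.
rewrite !pabs_rep mulf_eq0 (negPf hn) orbF.
case: eqP => [_|/eqP m0]; first by rewrite mul0r.
rewrite abszM lognM ?absz_gt0 ?expn_gt0 ?prime_gt0 //= pfactorK // exprD.
have := PX_neq0 k; have := PX_neq0 n; have := PX_neq0 (logn p `|m|).
move=> h1 h2 h3; field. by rewrite h1 h2.
Qed.

Lemma pabs_scaleV n (s : R) : inHp p s -> pabs p ((p%:R ^+ n)^-1 * s) = p%:R ^+ n * pabs p s.
Proof.
move=> [m [k ->]].
have -> : (p%:R ^+ n)^-1 * (m%:~R / p%:R ^+ k) = m%:~R / p%:R ^+ (k + n) :> R.
  by rewrite exprD invfM; ring.
rewrite !pabs_rep; case: eqP => _; first by rewrite mulr0.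
rewrite exprD; ring.
Qed.

End Pabs.

Section Merge.
Variable R : realType.

Definition incr (t : nat -> R) k := forall i, (i < k)%N -> t i < t i.+1.
Definition pieces (P : R -> R -> Prop) (t : nat -> R) k :=
  forall i, (i < k)%N -> P (t i) (t i.+1).
Definition part (P : R -> R -> Prop) a b :=
  exists (k : nat) (t : nat -> R),
    [/\ t 0%N = a, t k = b, (forall i, (i < k)%N -> t i < t i.+1) &
        forall i, (i < k)%N -> P (t i) (t i.+1)].
Definition hered (P : R -> R -> Prop) :=
  forall u v u' v', P u v -> u <= u' -> u' < v' -> v' <= v -> P u' v'.

Lemma incr_le t k : incr t k -> forall i j, (i <= j <= k)%N -> t i <= t j.
Proof.
move=> It i; elim=> [|j IH] /andP [ij jk].
  by move: ij; rewrite leqn0 => /eqP ->.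
move: ij; rewrite leq_eqVlt => /orP [/eqP -> //|ij].
apply: le_trans (IH _) (ltW (It _ jk)).
by rewrite -ltnS ij /= ltnW.
Qed.

Lemma part_prepend P a u b : part P u b -> a < u -> P a u -> part P a b.
Proof.
move=> [m [s [s0 sm si sP]]] au Pau.
exists m.+1, (fun i => if i is i'.+1 then s i' else a); split => //.
- by case=> [|i] /=; rewrite ?s0 //; rewrite ltnS; apply: si.
- by case=> [|i] /=; rewrite ?s0 //; rewrite ltnS; apply: sP.
Qed.

Lemma part_one P a b : a < b -> P a b -> part P a b.
Proof.
move=> ab Pab; exists 1%N, (fun i => if i is 0%N then a else b); split => //.
- by case.
- by case.
Qed.

Lemma part_mono (P Q : R -> R -> Prop) a b : (forall u v, u < v -> P u v -> Q u v) ->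
  part P a b -> part Q a b.
Proof.
move=> PQ [k [t [t0 tk ti tP]]]; exists k, t; split => // i ik.
by apply: PQ; [apply: ti| apply: tP].
Qed.

Lemma merge_aux P Q : hered P -> hered Q -> forall N a b k t k' t',
  (k + k' <= N)%N -> a < b -> t 0%N = a -> t k = b -> incr t k -> pieces P t k ->
  t' 0%N = a -> t' k' = b -> incr t' k' -> pieces Q t' k' ->
  part (fun u v => P u v /\ Q u v) a b.
Proof.
move=> hP hQ; elim=> [|N IH] a b k t k' t' kN ab t0 tk It Pt t'0 t'k It' Qt'.
  move: kN; rewrite leqn0 addn_eq0 => /andP [/eqP k0 _].
  by move: ab; rewrite -t0 -tk k0 ltxx.
case: k kN tk It Pt => [|j] kN tk It Pt.
  by move: ab; rewrite -t0 -tk ltxx.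
case: k' kN t'k It' Qt' => [|j'] kN t'k It' Qt'.
  by move: ab; rewrite -t'0 -t'k ltxx.
have au : a < t 1%N by rewrite -t0; apply: It.
have au' : a < t' 1%N by rewrite -t'0; apply: It'.
have ub : t 1%N <= b by rewrite -tk; apply: (incr_le It); rewrite leqnn.
have ub' : t' 1%N <= b by rewrite -t'k; apply: (incr_le It'); rewrite leqnn.
have P0 : P a (t 1%N) by rewrite -t0; apply: Pt.
have Q0 : Q a (t' 1%N) by rewrite -t'0; apply: Qt'.
case: (ltgtP (t 1%N) (t' 1%N)) => [lt|gt|eq].
-
  set u := t 1%N.
  apply: (part_prepend (u := u)) => //; last first.
    split => //; apply: (hQ _ _ _ _ Q0); [exact: lexx|exact: au|exact: ltW].
  apply: (IH u b j (fun i => t i.+1) j'.+1 (fun i => if i is 0%N then u else t' i)) => //.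
  + exact: lt_le_trans lt ub'.
  + by move=> i ij; apply: It.
  + by move=> i ij; apply: Pt.
  + by case=> [|i] // ij; apply: It'.
  + case=> [|i] ij; last by apply: Qt'.
    apply: (hQ _ _ _ _ Q0); [exact: ltW au|exact: lt|exact: lexx].
-
  set u := t' 1%N.
  apply: (part_prepend (u := u)) => //; last first.
    split => //; apply: (hP _ _ _ _ P0); [exact: lexx|exact: au'|exact: ltW].
  apply: (IH u b j.+1 (fun i => if i is 0%N then u else t i) j' (fun i => t' i.+1)) => //.
  all: try by move: kN; rewrite addnS ltnS.
  + exact: lt_le_trans gt ub.
  + by case=> [|i] // ij; apply: It.
  + case=> [|i] ij; last by apply: Pt.
    apply: (hP _ _ _ _ P0); [exact: ltW au'|exact: gt|exact: lexx].
  + by move=> i ij; apply: It'.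
  + by move=> i ij; apply: Qt'.
-
  set u := t 1%N.
  have [ubb|ulb] := eqVneq u b.
    apply: part_one => //; rewrite -ubb; split => //; by rewrite /u eq.
  have ulb' : u < b by rewrite lt_neqAle ulb ub.
  apply: (part_prepend (u := u)) => //; last by split => //; rewrite /u eq.
  apply: (IH u b j (fun i => t i.+1) j' (fun i => t' i.+1)) => //.
  all: try by move: kN; rewrite addSn addnS ltnS => /ltnW.
  + by move=> i ij; apply: It.
  + by move=> i ij; apply: Pt.
  + by move=> i ij; apply: It'.
  + by move=> i ij; apply: Qt'.
Qed.

Lemma merge P Q a b : hered P -> hered Q -> a < b -> part P a b -> part Q a b ->
  part (fun u v => P u v /\ Q u v) a b.
Proof.
move=> hP hQ ab [k [t [t0 tk It Pt]]] [k' [t' [t'0 t'k It' Qt']]].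
exact: (merge_aux hP hQ (leqnn (k + k')) ab t0 tk It Pt t'0 t'k It' Qt').
Qed.

End Merge.

Section Fun.
Variable R : realType.
Variable p : nat.

Hypothesis hp : prime p.

Definition comb (a b : R) (g h : posR R -> R) : posR R -> R := fun x => a * g x + b * h x.

Lemma ext_comb a b g h x : ext (comb a b g h) x = a * ext g x + b * ext h x.
Proof. by rewrite /ext; case: (insub x) => [u|] /=; rewrite ?mulr0 ?addr0. Qed.

Definition raff (g : posR R -> R) x s := exists d c, 0 < d /\ forall y, x <= y <= x + d -> ext g y = s * y + c.
Definition laff (g : posR R -> R) x s := exists d c, 0 < d /\ forall y, x - d <= y <= x -> ext g y = s * y + c.

Lemma pw_raff g x : pw_affine p g -> 0 < x -> exists2 s, inHp p s & raff g x s.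
Proof.
case=> _ pw x0.
have x1 : x < x + 1 by lra.
have [k [t [t0 tk ti tP]]] := pw x (x + 1) x0 x1.
have k0 : (0 < k)%N.
  case: k tk ti tP => // tk; move: tk; rewrite t0 => E _ _; lra.
have [s [c [hs hy]]] := tP 0%N k0.
exists s => //; exists (t 1%N - x), c; split; first by rewrite subr_gt0 -t0 ti.
move=> y /andP[h1 h2]; apply: hy; rewrite t0 h1 /=; lra.
Qed.

Lemma pw_laff g x : pw_affine p g -> 0 < x -> exists2 s, inHp p s & laff g x s.
Proof.
case=> _ pw x0.
have hx : x / 2 < x by lra.
have [k [t [t0 tk ti tP]]] := pw (x / 2) x ltac:(lra) hx.
case: k tk ti tP => [|j] tk ti tP.
  by move: tk; rewrite t0 => E; lra.
have [s [c [hs hy]]] := tP j (ltnSn j).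
exists s => //; exists (x - t j), c; split; first by rewrite subr_gt0 -tk ti.
move=> y /andP[h1 h2]; apply: hy; rewrite tk h2 andbT; lra.
Qed.

Lemma raff_rslope g x s : raff g x s -> rslope g x = s.
Proof.
case=> d [c [d0 hy]]; rewrite /rslope; apply: lim_near_cst; first exact: Rhausdorff.
near=> t.
have t0 : 0 < t by near: t; exact: nbhs_right_gt.
have td : t < d by near: t; exact: nbhs_right_lt.
rewrite !hy; first (field; lra).
- by rewrite lexx /=; lra.
- apply/andP; lra.
Unshelve. all: by end_near.
Qed.

Lemma laff_lslope g x s : laff g x s -> lslope g x = s.
Proof.
case=> d [c [d0 hy]]; rewrite /lslope; apply: lim_near_cst; first exact: Rhausdorff.
near=> t.
have t0 : t < 0 by near: t; exact: nbhs_left_lt.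
have td : - d < t by near: t; apply: nbhs_left_gt; lra.
rewrite !hy; first (field; lra).
- by rewrite lexx andbT; lra.
- apply/andP; lra.
Unshelve. all: by end_near.
Qed.

Lemma raff_ordr g x s : 0 < x -> raff g x s ->
  lim ((fun e => (ext g ((1 + e) * x) - ext g x) / e) @ 0^'+) = x * s.
Proof.
move=> x0; case=> d [c [d0 hy]]; apply: lim_near_cst; first exact: Rhausdorff.
have dx : 0 < d / x by apply: divr_gt0.
near=> e.
have e0 : 0 < e by near: e; exact: nbhs_right_gt.
have ed : e < d / x by near: e; exact: nbhs_right_lt.
have ex : e * x < d by rewrite -ltr_pdivlMr.
rewrite !hy; first (field; lra).
- by rewrite lexx /=; lra.
- apply/andP; split; nra.
Unshelve. all: by end_near.
Qed.

Lemma laff_ordl g x s : 0 < x -> laff g x s ->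
  lim ((fun e => (ext g ((1 + e) * x) - ext g x) / e) @ 0^'-) = x * s.
Proof.
move=> x0; case=> d [c [d0 hy]]; apply: lim_near_cst; first exact: Rhausdorff.
have dx : 0 < d / x by apply: divr_gt0.
near=> e.
have e0 : e < 0 by near: e; exact: nbhs_left_lt.
have ed : - (d / x) < e by near: e; apply: nbhs_left_gt; lra.
have ex : - d < e * x.
  have : - (d / x) * x < e * x by rewrite ltr_pM2r.
  by rewrite mulNr divfK ?gt_eqF.
rewrite !hy; first (field; lra).
- by rewrite lexx andbT; lra.
- apply/andP; split; nra.
Unshelve. all: by end_near.
Qed.

Lemma raff_comb a b g h x s s' : raff g x s -> raff h x s' -> raff (comb a b g h) x (a * s + b * s').
Proof.
case=> d [c [d0 hy]] [d' [c' [d'0 hy']]].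
exists (Num.min d d'), (a * c + b * c'); split; first by rewrite lt_min d0 d'0.
move=> y /andP [h1 h2]; rewrite ext_comb hy ?hy'; first ring.
- by rewrite h1 /=; apply: le_trans h2 _; rewrite lerD2l ge_min lexx orbT.
- by rewrite h1 /=; apply: le_trans h2 _; rewrite lerD2l ge_min lexx.
Qed.

Lemma laff_comb a b g h x s s' : laff g x s -> laff h x s' -> laff (comb a b g h) x (a * s + b * s').
Proof.
case=> d [c [d0 hy]] [d' [c' [d'0 hy']]].
exists (Num.min d d'), (a * c + b * c'); split; first by rewrite lt_min d0 d'0.
move=> y /andP [h1 h2]; rewrite ext_comb hy ?hy'; first ring.
- by rewrite h2 andbT; apply: le_trans h1; rewrite lerD2l lerN2 ge_min lexx orbT.
- by rewrite h2 andbT; apply: le_trans h1; rewrite lerD2l lerN2 ge_min lexx.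
Qed.


Definition piece (g : posR R -> R) u v :=
  exists s c : R, inHp p s /\ forall y, u <= y <= v -> ext g y = s * y + c.

Lemma piece_hered g : hered (piece g).
Proof.
move=> u v u' v' [s [c [hs hy]]] h1 h2 h3; exists s, c; split => // y /andP [y1 y2].
by apply: hy; apply/andP; split; [apply: le_trans y1| apply: le_trans h3].
Qed.

Lemma pw_comb a b g h : inHp p a -> inHp p b -> pw_affine p g -> pw_affine p h ->
  pw_affine p (comb a b g h).
Proof.
move=> ha hb [cg pg] [ch ph]; split.
  move=> x x0.
  have -> : ext (comb a b g h) = fun y => a * ext g y + b * ext h y.
    by apply: funext => y; exact: ext_comb.
  apply: cvgD; apply: cvgM; [exact: cvg_cst| exact: cg| exact: cvg_cst| exact: ch].
move=> u v u0 uv.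
have Pg : part (piece g) u v by exact: (pg u v u0 uv).
have Ph : part (piece h) u v by exact: (ph u v u0 uv).
have M := merge (piece_hered (g:=g)) (piece_hered (g:=h)) uv Pg Ph.
suff : part (piece (comb a b g h)) u v by [].
apply: (part_mono _ M) => u' v' _ [[s [c [hs hy]]] [s' [c' [hs' hy']]]].
exists (a * s + b * s'), (a * c + b * c'); split.
  have H1 := inHp_mul ha hs. have H2 := inHp_mul hb hs'. have H3 := inHp_add hp H1 H2. exact: H3.
move=> y yI; rewrite ext_comb hy // hy' //; ring.
Qed.

Lemma inK_comb a b g h : inHp p a -> inHp p b -> inK p g -> inK p h ->
  inK p (comb a b g h).
Proof.
move=> ha hb [pg eg] [ph eh]; split; first exact: pw_comb.
by move=> x x0; rewrite !ext_comb eg // eh.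
Qed.

Lemma pw_info g x : pw_affine p g -> 0 < x ->
  exists sr sl, [/\ inHp p sr, inHp p sl, raff g x sr & laff g x sl].
Proof.
move=> pg x0; have [sr hr rr] := pw_raff pg x0; have [sl hl ll] := pw_laff pg x0.
by exists sr, sl; split.
Qed.

Lemma ordf_aff g x sr sl : 0 < x -> raff g x sr -> laff g x sl -> ordf g x = x * sr - x * sl.
Proof. by move=> x0 rr ll; rewrite /ordf (raff_ordr x0 rr) (laff_ordl x0 ll). Qed.

Lemma comb_slopes a b g h x : pw_affine p g -> pw_affine p h -> 0 < x ->
  [/\ rslope (comb a b g h) x = a * rslope g x + b * rslope h x,
      lslope (comb a b g h) x = a * lslope g x + b * lslope h x &
      ordf (comb a b g h) x = a * ordf g x + b * ordf h x].
Proof.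
move=> pg ph x0.
have [sr [sl [_ _ rg lg]]] := pw_info pg x0.
have [sr' [sl' [_ _ rh lh]]] := pw_info ph x0.
have rc := raff_comb a b rg rh; have lc := laff_comb a b lg lh.
rewrite !(raff_rslope rc) (raff_rslope rg) (raff_rslope rh).
rewrite !(laff_lslope lc) (laff_lslope lg) (laff_lslope lh).
rewrite (ordf_aff x0 rc lc) (ordf_aff x0 rg lg) (ordf_aff x0 rh lh); split => //; ring.
Qed.

Lemma slopes_Hp (g : posR R -> R) x : pw_affine p g -> 0 < x -> inHp p (rslope g x) /\ inHp p (lslope g x).
Proof.
move=> pg x0; have [sr [sl [h1 h2 rg lg]]] := pw_info pg x0.
by rewrite (raff_rslope rg) (laff_lslope lg).
Qed.

End Fun.

Section Top.
Variable R : realType.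
Variable p : nat.
Hypothesis hp : prime p.

Lemma dist_scale (f g f' g' : posR R -> R) (c : R) : 0 < c ->
  (forall y, `|ext f' y - ext g' y| = c * `|ext f y - ext g y|) ->
  dist p f' g' <= c * dist p f g.
Proof.
move=> c0 E; rewrite /dist.
set S := [set `|ext f x - ext g x| | x in `[1, p%:R]%classic].
set S' := [set `|ext f' x - ext g' x| | x in `[1, p%:R]%classic].
have ne : S' !=set0.
  exists `|ext f' 1 - ext g' 1|, 1 => //=.
  by rewrite in_itv /= lexx ler1n prime_gt0.
have [ubS|nubS] := pselect (has_ubound S).
  apply: ge_sup => // r [x xI <-]; rewrite E ler_pM2l //.
  by apply: ub_le_sup => //; exists x.
rewrite sup_out; last first.
  move=> [_ [M hM]]; apply: nubS; exists (M / c) => r [x xI <-].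
  rewrite ler_pdivlMr // mulrC -E; apply: hM; by exists x.
rewrite sup_out ?mulr0 //; by move=> [].
Qed.

Definition ucont (A : set (Kelt R)) (F : Kelt R -> Kelt R) :=
  forall e : R, 0 < e -> exists2 d : R, 0 < d &
    forall x y, A x -> A y -> close p x y d -> close p (F x) (F y) e.

Lemma covdim_transport (A B : set (Kelt R)) (F G : Kelt R -> Kelt R) n :
  (forall x, A x -> B (F x)) -> (forall z, B z -> A (G z)) ->
  (forall z, B z -> F (G z) = z) -> ucont A F -> ucont B G ->
  covdim_le p A n -> covdim_le p B n.
Proof.
move=> AB BA FG uF uG cA m U hU hcov.
pose U' i := [set x | A x /\ U i (F x)].
have hU' : forall i, (i < m)%N -> openIn p A (U' i).
  move=> i im; split; first by move=> x [].
  move=> x [Ax Ux]; have [_ hUi] := hU i im.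
  have [e e0 He] := hUi _ Ux.
  have [d d0 Hd] := uF e e0.
  exists d => // y Ay cxy; split => //; apply: He; first exact: AB.
  exact: Hd.
have hcov' : forall x, A x -> exists2 i, (i < m)%N & U' i x.
  by move=> x Ax; have [i im Ui] := hcov _ (AB _ Ax); exists i.
have [k [V' [hV' cV' rV' oV']]] := cA m U' hU' hcov'.
exists k, (fun j => [set z | B z /\ V' j (G z)]); split.
- move=> j jk; split; first by move=> x [].
  move=> z [Bz Vz]; have [_ hVj] := hV' j jk.
  have [e e0 He] := hVj _ Vz.
  have [d d0 Hd] := uG e e0.
  exists d => // y By czy; split => //; apply: He; first exact: BA.
  exact: Hd.
- by move=> z Bz; have [j jk Vj] := cV' _ (BA _ Bz); exists j.
- move=> j jk; have [i im sub] := rV' j jk; exists i => // z [Bz Vz].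
  by have [_] := sub _ Vz; rewrite FG.
- move=> z Bz J uJ HJ; apply: (oV' (G z) (BA _ Bz) J uJ) => j jJ.
  by have [jk [_ Vz]] := HJ j jJ.
Qed.

Lemma top_dim_eq (A B : set (Kelt R)) (F G : Kelt R -> Kelt R) :
  (forall x, A x -> B (F x)) -> (forall z, B z -> A (G z)) ->
  (forall z, B z -> F (G z) = z) -> (forall x, A x -> G (F x) = x) ->
  ucont A F -> ucont B G -> top_dim p A = top_dim p B.
Proof.
move=> AB BA FG GF uF uG.
have E : [set n | covdim_le p A n] = [set n | covdim_le p B n].
  apply/seteqP; split => n /=.
  - exact: covdim_transport AB BA FG uF uG.
  - exact: covdim_transport BA AB GF uG uF.
by rewrite /top_dim E.
Qed.

Lemma ucont_omap (A : set (Kelt R)) (T : (posR R -> R) -> (posR R -> R)) (c : R) : 0 < c ->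
  (forall f g y, `|ext (T f) y - ext (T g) y| = c * `|ext f y - ext g y|) ->
  ucont A (omap T).
Proof.
move=> c0 HT e e0; exists (e / c); first by apply: divr_gt0.
move=> [f|] [g|] //= _ _ fg.
apply: le_lt_trans (dist_scale c0 (HT f g)) _.
by rewrite -ltr_pdivlMl // mulrC.
Qed.

End Top.

Lemma lin_bound (R : realType) p (s t b lam c : R) : prime p -> b = 1 \/ b = -1 ->
  inHp p s -> inHp p t -> 0 < lam -> pabs p s / lam <= c -> pabs p t / lam <= c ->
  pabs p (1 * s + b * t) / lam <= c.
Proof.
move=> hp hb hs ht l0 h1 h2.
have hbt : inHp p (b * t) by case: hb => ->; rewrite ?mul1r ?mulN1r //; apply: inHp_opp.
have ebt : pabs p (b * t) = pabs p t by case: hb => ->; rewrite ?mul1r ?mulN1r // pabs_opp.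
rewrite mul1r ler_pdivrMr //; apply: le_trans (pabs_add hp hs hbt) _.
by rewrite ge_max ebt -!ler_pdivrMr // h1 h2.
Qed.

Lemma ext_scale (R : realType) (c : R) (g : posR R -> R) y :
  ext (fun x => c * g x) y = c * ext g y.
Proof. by rewrite /ext; case: (insub y) => [u|] /=; rewrite ?mulr0. Qed.

Theorem lemma5p18 (R : realType) (p : nat) (D : R -> R) (f : posR R -> R) :
  prime p -> is_divisor p D -> inK p f ->
  (* (i) *)
  (forall n : nat, pnorm_le p f (p%:R ^+ n) ->
     let A := H0rho p D (p%:R ^+ n) in
     let B := H0rho p (div_add_ord D f) (p%:R ^+ n) in
     let phi := fun xi : Kelt R => omap (fun g => (fun x => g x - f x)) xi in
     [/\ set_bij A B phi,
         (forall xi eta, A xi -> A eta -> phi (kjoin xi eta) = kjoin (phi xi) (phi eta)) &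
         (forall (a : Rmax R) xi, A xi -> phi (kact a xi) = kact a (phi xi))]) /\
  (* (ii) *)
  (forall n : nat,
     let A := H0rho p D (p%:R ^+ n) in
     let B := H0rho p (div_scale (p%:R ^+ n) D) 1 in
     let F := fun xi : Kelt R => omap (fun g => (fun x => p%:R ^+ n * g x)) xi in
     [/\ set_bij A B F,
         (forall xi eta, A xi -> A eta -> F (kjoin xi eta) = kjoin (F xi) (F eta)),
         (forall (a : Rmax R) xi, A xi ->
            F (kact a xi) = kact (omap (fun a => p%:R ^+ n * a) a) (F xi)) &
         top_dim p A = top_dim p B]).
Proof.
move=> hp _ hf; have [pf _] := hf; split.
- move=> n hn A B phi.
  have phiE : forall g, phi (Some g) = Some (comb 1 (-1) g f).
    by move=> g; rewrite /phi /=; congr Some; apply/funext => x; rewrite /comb; ring.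
  have h1 : inHp p (1 : R) := inHp1 R p.
  have hm1 : inHp p (-1 : R) := inHp_opp h1.
  have H1 : forall g, A (Some g) -> B (Some (comb 1 (-1) g f)).
    move=> g [[Kg Dg] Ng]; have [pg _] := Kg; split; [split|].
    + by have := inK_comb hp h1 hm1 Kg hf.
    + move=> lam l0; have [_ _ ->] := comb_slopes 1 (-1) pg pf l0.
      rewrite /div_add_ord; have := Dg lam l0; lra.
    + move=> lam l0; have [-> -> _] := comb_slopes 1 (-1) pg pf l0.
      have [sr sl] := slopes_Hp pg l0; have [fr fl] := slopes_Hp pf l0.
      have [Ng1 Ng2] := Ng lam l0; have [Nf1 Nf2] := hn lam l0.
      by split; apply: lin_bound => //; right.
  have H2 : forall h, B (Some h) -> A (Some (comb 1 1 h f)).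
    move=> h [[Kh Dh] Nh]; have [ph _] := Kh; split; [split|].
    + by have := inK_comb hp h1 h1 Kh hf.
    + move=> lam l0; have [_ _ ->] := comb_slopes 1 1 ph pf l0.
      have := Dh lam l0; rewrite /div_add_ord; lra.
    + move=> lam l0; have [-> -> _] := comb_slopes 1 1 ph pf l0.
      have [sr sl] := slopes_Hp ph l0; have [fr fl] := slopes_Hp pf l0.
      have [Nh1 Nh2] := Nh lam l0; have [Nf1 Nf2] := hn lam l0.
      by split; apply: lin_bound => //; left.
  split; first split.
  + by move=> [g|] Ag; [rewrite phiE; exact: H1 | ].
  + move=> [g|] [g'|] _ _ //=; rewrite /phi /= => -[E]; congr Some.
    apply/funext => x; have := congr1 (fun F => F x) E => /= /addIr //.
  + move=> [h|] Bh; last by exists None.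
    exists (Some (comb 1 1 h f)); first exact: H2.
    by rewrite /phi /=; congr Some; apply/funext => x; rewrite /comb; ring.
  + move=> [g|] [h|] _ _ //=; congr Some; apply/funext => x; by rewrite addr_maxl.
  + move=> [a|] [g|] _ //=; congr Some; apply/funext => x; by rewrite addrAC.
- move=> n A B F.
  have c0 : 0 < (p%:R ^+ n : R) := PX_gt0 R hp n.
  have cn0 : (p%:R ^+ n : R) != 0 by rewrite gt_eqF.
  have hc : inHp p (p%:R ^+ n) := inHp_PX R p n.
  have hcV : inHp p (p%:R ^+ n)^-1 := inHp_PXV R p n.
  have h0 : inHp p (0 : R) := inHp0 R p.
  pose G := fun z : Kelt R => omap (fun h => comb (p%:R ^+ n)^-1 0 h h) z.
  have FE : forall g, F (Some g) = Some (comb (p%:R ^+ n) 0 g g).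
    by move=> g; rewrite /F /=; congr Some; apply/funext => x; rewrite /comb; ring.
  have H1 : forall g, A (Some g) -> B (Some (comb (p%:R ^+ n) 0 g g)).
    move=> g [[Kg Dg] Ng]; have [pg _] := Kg; split; [split|].
    + by have := inK_comb hp hc h0 Kg Kg.
    + move=> lam l0; have [_ _ ->] := comb_slopes (p%:R ^+ n) 0 pg pg l0.
      rewrite /div_scale mul0r addr0 -mulrDr; apply: mulr_ge0; [exact: ltW|exact: Dg].
    + move=> lam l0; have [-> -> _] := comb_slopes (p%:R ^+ n) 0 pg pg l0.
      have [sr sl] := slopes_Hp pg l0.
      have [Ng1 Ng2] := Ng lam l0.
      rewrite !mul0r !addr0 !pabs_scale // !(mulrAC _ (p%:R ^+ n)^-1) !ler_pdivrMr // !mul1r.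
      by split; rewrite -ler_pdivrMr.
  have H2 : forall h, B (Some h) -> A (Some (comb (p%:R ^+ n)^-1 0 h h)).
    move=> h [[Kh Dh] Nh]; have [ph _] := Kh; split; [split|].
    + by have := inK_comb hp hcV h0 Kh Kh.
    + move=> lam l0; have [_ _ ->] := comb_slopes (p%:R ^+ n)^-1 0 ph ph l0.
      have := Dh lam l0; rewrite /div_scale mul0r addr0 => H.
      have -> : D lam + (p%:R ^+ n)^-1 * ordf h lam = (p%:R ^+ n)^-1 * ((p%:R ^+ n) * D lam + ordf h lam) by field.
      by apply: mulr_ge0 => //; rewrite invr_ge0 ltW.
    + move=> lam l0; have [-> -> _] := comb_slopes (p%:R ^+ n)^-1 0 ph ph l0.
      have [sr sl] := slopes_Hp ph l0.
      have [Nh1 Nh2] := Nh lam l0.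
      rewrite !mul0r !addr0 !pabs_scaleV // -!mulrA.
      by split; apply: ler_piMr => //; exact: ltW.
  have FG : forall z, B z -> F (G z) = z.
    move=> [h|] _ //=; rewrite /F /=; congr Some; apply/funext => x; rewrite /comb.
    by field.
  have GF : forall x, A x -> G (F x) = x.
    move=> [g|] _ //=; rewrite /G /=; congr Some; apply/funext => x; rewrite /comb.
    by field.
  have AB : forall x, A x -> B (F x) by move=> [g|] Ag //; rewrite FE; exact: H1.
  have BA : forall z, B z -> A (G z) by move=> [h|] Bh //; exact: H2.
  split.
  + split => //.
    * move=> [g|] [g'|] _ _ //=; rewrite /F /= => -[E]; congr Some.
      apply/funext => x; have := congr1 (fun F => F x) E => /= /(mulfI cn0) //.
    * move=> z Bz; exists (G z); [exact: BA | exact: FG].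
  + move=> [g|] [h|] _ _ //=; congr Some; apply/funext => x; rewrite maxr_pMr //; exact: ltW.
  + move=> [a|] [g|] _ //=; congr Some; apply/funext => x; by rewrite mulrDr.
  + apply: (top_dim_eq AB BA FG GF).
    * apply: (ucont_omap hp A (T := fun g x => (p%:R ^+ n) * g x) (c := p%:R ^+ n)) => // g1 g2 y.
      by rewrite !ext_scale -mulrBr normrM gtr0_norm.
    * apply: (ucont_omap hp B (T := fun h => comb (p%:R ^+ n)^-1 0 h h) (c := (p%:R ^+ n)^-1)); first by rewrite invr_gt0.
      move=> g1 g2 y; rewrite !ext_comb.
      have -> : (p%:R ^+ n)^-1 * ext g1 y + 0 * ext g1 y - ((p%:R ^+ n)^-1 * ext g2 y + 0 * ext g2 y)
        = (p%:R ^+ n)^-1 * (ext g1 y - ext g2 y) by ring.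
      by rewrite normrM gtr0_norm // invr_gt0.
Qed.
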